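(* Let $n\ge1$, $N=2n+1$, and let $(a_j)_{j\ge0}$ be complex numbers with $|a_j|\le (j+2)^{-2}$ for all $j\ge 0$. Let $f(z)=-\sum_{j=0}^\infty a_jz^j$, let $z_1,\dots,z_N$ be the roots of $P_n(f;z)$ (with multiplicity) and $\lambda_k:=z_k^{-1}$. Then \[S_{j+1}(\lambda)-a_j=0,\qquad j=0,\dots,n-1,\] \[|S_{j+1}(\lambda)-a_j|\le\frac{r^{n-j}}{1-r^{n+1}}\left(15n+\frac{30}{1-r}\right),\qquad j\ge n,\] where $r\in(0,1)$ is arbitrary.
   Context: For $f$ analytic in the unit disc, $s_n(z)=s_n(f;z)$ denotes the $n$-th Taylor polynomial of $\exp\left(\int_0^z f(\zeta)\,d\zeta\right)$ (so $s_n(0)=1$), and $P_n(f;z):=s_n(z)+z^{2n+1}\overline{s}_n(1/z)$, where $\overline{s}_n$ is the polynomial with complex-conjugated coefficients; it has degree $2n+1$ and $P_n(0)=1$. For $\lambda_1,\dots,\lambda_N$, $S_\nu(\lambda)=\lambda_1^\nu+\dots+\lambda_N^\nu$. *)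

(* Defs.v *)
From HB Require Import structures.
From mathcomp Require Import all_boot all_order all_algebra.
From mathcomp Require Import reals complex.
Set Implicit Arguments. Unset Strict Implicit. Unset Printing Implicit Defensive.
Import Order.TTheory GRing.Theory Num.Theory.
Local Open Scope ring_scope.

Section Defs.
Variable R : realType.
Local Notation C := R[i].

(* Truncation (to degree n) of the primitive  int_0^z f  for
   f(z) = - sum_j a_j z^j :  - sum_{j<n} a_j z^{j+1}/(j+1).
   (Coefficients of degree > n play no role in the n-th Taylor polynomial
    of exp of this primitive.) *)
Definition prim_trunc (n : nat) (a : nat -> C) : {poly C} :=
  \poly_(i < n.+1) (if i is k.+1 then - a k / (k.+1)%:R else 0).

(* n-th Taylor polynomial of exp(g) for a power series g with g(0)=0:
   coefficient i is  sum_k [z^i] g^k / k!  (formal composition). *)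
Definition exp_taylor (n : nat) (g : {poly C}) : {poly C} :=
  \poly_(i < n.+1) (\sum_(k < n.+1) (g ^+ k)`_i / (k`!)%:R).

Definition s_n (n : nat) (a : nat -> C) : {poly C} :=
  exp_taylor n (prim_trunc n a).

(* P_n(f; z) = s_n(z) + z^(2n+1) * conj(s_n)(1/z). *)
Definition P_n (n : nat) (a : nat -> C) : {poly C} :=
  s_n n a + \sum_(k < n.+1) ((s_n n a)`_k)^*%:P * 'X^(2 * n + 1 - k).

Definition S_inv (zs : seq C) (nu : nat) : C :=
  \sum_(z <- zs) (z^-1) ^+ nu.

End Defs.

(* Main.v *)
Require Import Defs.
From HB Require Import structures.
From mathcomp Require Import all_boot all_order all_algebra.
From mathcomp Require Import reals complex.
From mathcomp Require Import ring lra zify.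
Import Order.TTheory GRing.Theory Num.Theory.
Local Open Scope ring_scope.

Section Norm1.
Variable F : numDomainType.

Definition norm1 (p : {poly F}) := \sum_(0 <= i < size p) `|p`_i|.

Lemma norm1_wide (p : {poly F}) m : (size p <= m)%N ->
  norm1 p = \sum_(0 <= i < m) `|p`_i|.
Proof.
move=> hm; rewrite /norm1 [RHS](big_cat_nat (leq0n _) hm) /=.
rewrite [X in _ + X]big_nat_cond [X in _ + X]big1 ?addr0 // => i /andP[/andP[hi _] _].
by rewrite nth_default ?normr0.
Qed.

Lemma norm1_ge0 p : 0 <= norm1 p.
Proof. by apply: sumr_ge0 => i _; exact: normr_ge0. Qed.

Lemma norm1_le_prefix (p : {poly F}) m :
  \sum_(0 <= i < m) `|p`_i| <= norm1 p.
Proof.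
rewrite (norm1_wide _ _ (leq_maxl (size p) m)).
rewrite (big_cat_nat (leq0n m) (leq_maxr (size p) m)) /= lerDl.
by apply: sumr_ge0 => i _; exact: normr_ge0.
Qed.

Lemma norm1D p q : norm1 (p + q) <= norm1 p + norm1 q.
Proof.
set m := maxn (size p) (size q).
rewrite (norm1_wide _ _ (size_polyD p q)) (norm1_wide _ _ (leq_maxl _ _ : (size p <= m)%N)).
rewrite (norm1_wide _ _ (leq_maxr _ _ : (size q <= m)%N)) -big_split /=.
by apply: ler_sum => i _; rewrite coefD ler_normD.
Qed.

Lemma norm1_0 : norm1 0 = 0.
Proof. by rewrite /norm1 size_poly0 big_geq. Qed.

Lemma norm1_sum I (r : seq I) (f : I -> {poly F}) :
  norm1 (\sum_(i <- r) f i) <= \sum_(i <- r) norm1 (f i).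
Proof.
elim: r => [|x r IH]; first by rewrite !big_nil norm1_0.
rewrite !big_cons; apply: le_trans (norm1D _ _) _; exact: lerD.
Qed.

Lemma norm1Z c p : norm1 (c *: p) <= `|c| * norm1 p.
Proof.
rewrite (norm1_wide _ _ (size_scale_leq c p)) /norm1 mulr_sumr.
by apply: ler_sum => i _; rewrite coefZ normrM.
Qed.

Lemma norm1MXn (p : {poly F}) j : norm1 (p * 'X^j)%R <= norm1 p.
Proof.
have hs : (size (p * 'X^j)%R <= j + size p)%N.
  apply: leq_trans (size_polyMleq _ _) _; rewrite size_polyXn; lia.
rewrite (norm1_wide _ _ hs) (big_cat_nat (leq0n j) (leq_addr _ _)) /=.
rewrite big_nat_cond big1 ?add0r; last first.
  by move=> i /andP[/andP[_ hi] _]; rewrite coefMXn hi normr0.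
rewrite -{1}[j]add0n big_addn addKn /norm1 le_eqVlt; apply/orP; left; apply/eqP.
by apply: eq_bigr => i _; rewrite coefMXn ltnNge leq_addl /= addnK.
Qed.

Lemma norm1M (p q : {poly F}) : norm1 (p * q) <= norm1 p * norm1 q.
Proof.
rewrite -{1}(coefK p) poly_def mulr_suml.
apply: le_trans (norm1_sum _ _ _) _.
rewrite /norm1 big_mkord mulr_suml; apply: ler_sum => i _.
rewrite -scalerAl mulrC; apply: le_trans (norm1Z _ _) _.
apply: ler_wpM2l; first exact: normr_ge0.
exact: norm1MXn.
Qed.

Lemma norm1_1 : norm1 1 = 1.
Proof. by rewrite /norm1 size_poly1 big_nat1 coef1 normr1. Qed.

Lemma norm1X (p : {poly F}) k : norm1 (p ^+ k) <= norm1 p ^+ k.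
Proof.
elim: k => [|k IH]; first by rewrite !expr0 norm1_1.
rewrite !exprSr; apply: le_trans (norm1M _ _) _.
by apply: ler_wpM2r; [exact: norm1_ge0|].
Qed.

Lemma take_horner_le m p (z : F) : `|z| <= 1 ->
  `|(take_poly m p).[z]| <= norm1 p.
Proof.
move=> hz; rewrite /take_poly horner_poly.
apply: le_trans (ler_norm_sum _ _ _) _.
apply: le_trans (norm1_le_prefix p m); rewrite big_mkord.
apply: ler_sum => i _; rewrite normrM normrX.
rewrite -{2}(mulr1 `|p`_i|); apply: ler_wpM2l; first exact: normr_ge0.
by apply: exprn_ile1.
Qed.

End Norm1.
Arguments norm1 {F}.
Arguments norm1_wide {F}.
Arguments norm1_ge0 {F}.
Arguments norm1_le_prefix {F}.
Arguments norm1D {F}.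
Arguments norm1_0 {F}.
Arguments norm1_sum {F}.
Arguments norm1Z {F}.
Arguments norm1MXn {F}.
Arguments norm1M {F}.
Arguments norm1_1 {F}.
Arguments norm1X {F}.
Arguments take_horner_le {F}.
Section Num.
Variable F : numFieldType.

Lemma nzk c k : ((c.+1)%:R + k%:R : F) != 0.
Proof. by rewrite -natrD pnatr_eq0. Qed.
Lemma nzk1 k : (1 + k%:R : F) != 0.
Proof. exact: (nzk 0 k). Qed.

Lemma term_le (k : nat) :
  ((k.+2%:R ^+ 2)^-1 / k.+1%:R : F) <= 2^-1 * (k.+1%:R^-1 - k.+2%:R^-1).
Proof.
have e1 : ((k.+2%:R ^+ 2)^-1 / k.+1%:R : F) = ((k.+2 ^ 2 * k.+1)%N%:R)^-1.
  rewrite natrM natrX; field.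
  by rewrite nzk1 (nzk 1).
have e2 : 2^-1 * (k.+1%:R^-1 - k.+2%:R^-1) = ((2 * k.+1 * k.+2)%N%:R : F)^-1.
  rewrite !natrM; field.
  by rewrite nzk1 (nzk 1).
rewrite e1 e2 lef_pV2 ?posrE ?ltr0n ?muln_gt0 ?expn_gt0 // ler_nat; nia.
Qed.

Lemma tele_sum n :
  \sum_(0 <= k < n) (2^-1 * (k.+1%:R^-1 - k.+2%:R^-1) : F) = 2^-1 * (1 - n.+1%:R^-1).
Proof.
elim: n => [|n IH]; first by rewrite big_geq // invr1 subrr mulr0.
rewrite big_nat_recr //= IH; ring.
Qed.

Lemma sum_terms_le n :
  \sum_(0 <= k < n) ((k.+2%:R ^+ 2)^-1 / k.+1%:R : F) <= 2^-1.
Proof.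
apply: le_trans (ler_sum _ (fun k _ => term_le k)) _.
rewrite tele_sum ler_piMr ?invr_ge0 ?ler0n // lerBlDr lerDl invr_ge0 ler0n //.
Qed.

Lemma geom_half n : \sum_(0 <= k < n) ((2^-1 : F) ^+ k.+1) = 1 - (2^-1) ^+ n.
Proof.
elim: n => [|n IH]; first by rewrite big_geq // expr0 subrr.
rewrite big_nat_recr //= IH exprS; field=> //.
Qed.

Lemma geom_lt1 n (x : F) : 0 <= x -> x <= 2^-1 ->
  \sum_(0 <= k < n) x ^+ k.+1 < 1.
Proof.
move=> x0 x2; apply: le_lt_trans (_ : \sum_(0 <= k < n) ((2^-1 : F) ^+ k.+1) < 1).
  apply: ler_sum => k _; apply: lerXn2r => //; rewrite nnegrE ?invr_ge0 ?ler0n //.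
by rewrite geom_half gtrBl exprn_gt0 // invr_gt0 ltr0n.
Qed.

End Num.
Arguments nzk {F}.
Arguments nzk1 {F}.
Arguments term_le {F}.
Arguments tele_sum {F}.
Arguments sum_terms_le {F}.
Arguments geom_half {F}.
Arguments geom_lt1 {F}.
Section Alg.
Variable R : realType.
Local Notation C := R[i].
Variables (n : nat) (a : nat -> C).

Local Notation g := (prim_trunc n a).
Definition E := \sum_(k < n.+1) (k`!%:R)^-1 *: g ^+ k.

Lemma sE : s_n n a = take_poly n.+1 E.
Proof.
rewrite /s_n /exp_taylor /take_poly; apply: eq_poly => i _.
rewrite /E coef_sum; apply: eq_bigr => k _; by rewrite coefZ mulrC.
Qed.

Lemma g0 : g`_0 = 0.
Proof. by rewrite coef_poly. Qed.

Lemma gX : 'X %| g.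
Proof.
have -> : ('X : {poly C}) = 'X - 0%:P by rewrite polyC0 subr0.
by rewrite dvdp_XsubCl /root horner_coef0 g0.
Qed.

Lemma E0 : E.[0] = 1.
Proof.
rewrite /E horner_sum big_ord_recl /= hornerZ expr0 hornerC fact0 invr1 mul1r.
rewrite big1 ?addr0 // => i _.
by rewrite hornerZ horner_exp horner_coef0 g0 expr0n /= mulr0.
Qed.

Lemma s0 : (s_n n a).[0] = 1.
Proof. by rewrite horner_coef0 sE coef_take_poly /= -horner_coef0 E0. Qed.

Lemma dE : 'X^n %| E^`() - g^`() * E.
Proof.
have key : E^`() - g^`() * E = - ((n`!%:R)^-1 *: (g^`() * g ^+ n)).
  rewrite /E linear_sum big_ord_recl /= linearZ /= expr0 derivC scaler0 add0r.
  rewrite big_ord_recr /= mulrDr opprD addrA.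
  have -> : \sum_(i < n) ((bump 0 i)`!%:R^-1 *: g ^+ bump 0 i)^`() =
            g^`() * \sum_(i < n) (i`!%:R^-1 *: g ^+ i).
    rewrite mulr_sumr; apply: eq_bigr => i _.
    rewrite derivZ deriv_exp /bump /= add0n -(@scaler_nat C {poly C}) scalerA -scalerAr.
    congr (_ *: _); rewrite factS natrM invfM mulrC mulrA mulfV ?mul1r //.
    by rewrite pnatr_eq0.
  by rewrite subrr add0r scalerAr.
rewrite key dvdpNr dvdpZr; last by rewrite invr_eq0 pnatr_eq0 -lt0n fact_gt0.
by apply: dvdp_mull; apply: dvdp_exp2r; exact: gX.
Qed.

Lemma deriv_dvd m (p : {poly C}) : 'X^(m.+1) %| p -> 'X^m %| p^`().
Proof.
case/dvdpP=> q ->; rewrite derivM derivXn /=.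
apply: dvdp_add; first by apply: dvdp_mull; rewrite dvdp_exp2l.
rewrite -(@scaler_nat C {poly C}) -scalerAr dvdpZr ?pnatr_eq0 //.
by apply: dvdp_mull.
Qed.


Lemma XG (z : C) m : z != 0 ->
  ('X - z%:P) * \sum_(v < m) ((z^-1)^+v.+1 *: 'X^v) = (z^-1)^+m *: 'X^m - 1.
Proof.
move=> hz; elim: m => [|m IH]; first by rewrite big_ord0 mulr0 !expr0 scale1r subrr.
rewrite big_ord_recr /= mulrDr IH !exprS -!mul_polyC !polyCM !polyC_exp.
have hZL : z%:P * (z^-1)%:P = 1 :> {poly C} by rewrite -polyCM mulfV.
transitivity ((z^-1)%:P * (z^-1)%:P ^+ m * ('X * 'X^m) - 1
   + (z^-1)%:P ^+ m * 'X^m * (1 - z%:P * (z^-1)%:P)); first by ring.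
by rewrite hZL subrr mulr0 addr0.
Qed.

Definition Gz (z : C) := \sum_(v < n) ((z^-1)^+v.+1 *: 'X^v).
Definition Qz (zs : seq C) := \sum_(z <- zs) Gz z.

Lemma newton (zs : seq C) : 0 \notin zs ->
  'X^n %| (\prod_(z <- zs) ('X - z%:P))^`() + \prod_(z <- zs) ('X - z%:P) * Qz zs.
Proof.
elim: zs => [|z zs IH]; first by rewrite big_nil derivC add0r /Qz big_nil mulr0 dvdp0.
rewrite in_cons negb_or => /andP[hz /IH {}IH].
rewrite eq_sym in hz.
rewrite /Qz !big_cons -/(Qz zs) derivM derivXsubC mul1r.
set Pi := \prod_(j <- zs) ('X - j%:P).
have hG := XG z n hz; rewrite -/(Gz z) in hG.
have -> : Pi + ('X - z%:P) * Pi^`() + ('X - z%:P) * Pi * (Gz z + Qz zs)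
   = Pi * (('X - z%:P) * Gz z + 1) + ('X - z%:P) * (Pi^`() + Pi * Qz zs) by ring.
rewrite hG subrK; apply: dvdp_add; last by apply: dvdp_mull.
by apply: dvdp_mull; rewrite -mul_polyC; apply: dvdp_mull.
Qed.


Local Notation s := (s_n n a).
Definition tpoly := \sum_(k < n.+1) ((s`_k)^*%:P * 'X^(2 * n + 1 - k)).

Lemma Pst : P_n n a = s + tpoly.
Proof. by []. Qed.

Lemma t0 : tpoly.[0] = 0.
Proof.
rewrite /tpoly horner_sum big1 // => k _.
rewrite hornerM hornerC hornerXn expr0n /=; case: k => k /= hk.
have -> : (2 * n + 1 - k == 0)%N = false by apply/negbTE; lia.
by rewrite mulr0.
Qed.

Lemma P0 : (P_n n a).[0] = 1.
Proof. by rewrite Pst hornerD s0 t0 addr0. Qed.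

Lemma tdvd : 'X^(n.+1) %| tpoly.
Proof.
rewrite /tpoly; apply: (big_ind (fun p => 'X^(n.+1) %| p)).
- exact: dvdp0.
- by move=> p q hp hq; apply: dvdp_add.
move=> [k hk] _ /=; apply: dvdp_mull; apply: dvdp_exp2l; lia.
Qed.

Lemma part1 (zs : seq C) : P_n n a = \prod_(z <- zs) ('X - z%:P) ->
  forall j, (j < n)%N -> S_inv zs j.+1 - a j = 0.
Proof.
move=> hzs j hj.
have h0 : 0 \notin zs.
  apply/negP => h; have := root_prod_XsubC zs 0; rewrite -hzs h /root P0.
  by rewrite oner_eq0.
have N := newton zs h0; rewrite -hzs Pst in N.
have hXn : 'X^n %| ('X^(n.+1) : {poly C}) by apply: dvdp_exp2l.
have ht := tdvd.
have A : 'X^n %| s^`() + s * Qz zs.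
  have -> : s^`() + s * Qz zs = ((s + tpoly)^`() + (s + tpoly) * Qz zs)
                                 - (tpoly^`() + tpoly * Qz zs).
    by rewrite derivD; ring.
  apply: dvdp_sub => //; apply: dvdp_add; first exact: deriv_dvd.
  by apply: dvdp_mulr; apply: dvdp_trans ht.
set u := drop_poly n.+1 E * 'X^(n.+1).
have hEu : E = s + u by rewrite sE /u poly_take_drop.
have B : 'X^n %| s^`() - (prim_trunc n a)^`() * s.
  have -> : s^`() - (prim_trunc n a)^`() * s =
     (E^`() - (prim_trunc n a)^`() * E) - u^`() + (prim_trunc n a)^`() * u.
    by rewrite hEu derivD; ring.
  apply: dvdp_add; first apply: dvdp_sub.
  - exact: dE.
  - by apply: deriv_dvd; apply: dvdp_mull.
  by apply: dvdp_mull; apply: dvdp_trans hXn _; apply: dvdp_mull.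
have Cc : 'X^n %| (Qz zs + (prim_trunc n a)^`()) * s.
  have -> : (Qz zs + (prim_trunc n a)^`()) * s =
     (s^`() + s * Qz zs) - (s^`() - (prim_trunc n a)^`() * s) by ring.
  exact: dvdp_sub.
have cop : coprimep ('X^n) s.
  apply: coprimep_expl; rewrite coprimep_sym.
  have -> : ('X : {poly C}) = 'X - 0%:P by rewrite polyC0 subr0.
  by rewrite coprimep_XsubC /root s0 oner_eq0.
rewrite Gauss_dvdpl // in Cc.
have := congr1 (fun p : {poly C} => p`_j) (divpK Cc); rewrite /= coefMXn hj coefD.
have -> : (Qz zs)`_j = S_inv zs j.+1.
  rewrite /Qz coef_sum /S_inv; apply: eq_bigr => z _.
  rewrite /Gz coef_sum (bigD1 (Ordinal hj)) //= coefZ coefXn eqxx mulr1.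
  rewrite big1 ?addr0 // => i hi; rewrite coefZ coefXn.
  by rewrite eq_sym; move: hi; rewrite -val_eqE /= => /negbTE ->; rewrite mulr0.
rewrite coef_deriv coef_poly ltnS hj /= -[(- a j / j.+1%:R) *+ j.+1]mulr_natr divfK ?pnatr_eq0 //.
Qed.

End Alg.

Section Ana.
Variable R : realType.
Local Notation C := R[i].
Variables (n : nat) (a : nat -> C).
Local Notation g := (prim_trunc n a).
Local Notation s := (s_n n a).

Lemma norm1_g (ha : forall j : nat, `|a j| <= (((j.+2)%:R) ^+ 2)^-1) :
  norm1 g <= 2^-1.
Proof.
rewrite (norm1_wide _ _ (size_poly _ _)) big_nat_recl // coef_poly /= normr0 add0r.
apply: le_trans (sum_terms_le n); apply: ler_sum => i _.
rewrite coef_poly ltnS; case: ltnP => hi /=.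
  rewrite normrM normrN normfV normr_nat; apply: ler_wpM2r; first by rewrite invr_ge0 ler0n.
  exact: ha.
rewrite normr0 mulr_ge0 ?invr_ge0 ?ler0n //.
by rewrite exprn_ge0 ?ler0n.
Qed.

Lemma Em1 : E R n a - 1 = \sum_(i < n) ((i.+1)`!%:R^-1 *: g ^+ i.+1).
Proof.
rewrite /E big_ord_recl /= fact0 invr1 expr0 scale1r addrAC subrr add0r.
by apply: eq_bigr => i _; rewrite /bump /= add1n.
Qed.

Lemma s_close (ha : forall j : nat, `|a j| <= (((j.+2)%:R) ^+ 2)^-1) (z : C) :
  `|z| <= 1 -> `|s.[z] - 1| < 1.
Proof.
move=> hz.
have -> : s.[z] - 1 = (take_poly n.+1 (E R n a - 1)).[z].
  have -> : take_poly n.+1 (E R n a - 1) = s - 1.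
    apply/polyP => i; rewrite coef_take_poly coefB sE coefB coef_take_poly coef1.
    by case: ifP => // hi; case: i hi => [|i] //= hi; rewrite subr0.
  by rewrite !hornerE.
apply: le_lt_trans (take_horner_le _ _ _ hz) _.
rewrite Em1.
apply: le_lt_trans (@norm1_sum _ 'I_n (index_enum 'I_n) (fun i : 'I_n => (i.+1)`!%:R^-1 *: g ^+ i.+1)) _.
have hx := norm1_g ha.
apply: le_lt_trans (geom_lt1 n _ (norm1_ge0 g) hx).
rewrite big_mkord; apply: ler_sum => i _.
apply: le_trans (norm1Z _ _) _.
have h1 : `|(i.+1)`!%:R^-1 : C| <= 1.
  by rewrite normfV normr_nat invf_le1 ?ltr0n ?fact_gt0 // ler1n fact_gt0.
apply: le_trans (_ : 1 * norm1 (g ^+ i.+1) <= _).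
  apply: ler_wpM2r => //; exact: norm1_ge0.
by rewrite mul1r; apply: norm1X.
Qed.



Lemma s_nz (ha : forall j : nat, `|a j| <= (((j.+2)%:R) ^+ 2)^-1) (z : C) :
  `|z| <= 1 -> s.[z] != 0.
Proof.
move=> hz; apply/negP => /eqP h; have := s_close ha z hz.
by rewrite h sub0r normrN normr1 ltxx.
Qed.

Lemma fact1 (z w : C) : `|z| <= 1 -> 1 <= `|w| -> `|1 - z * w^*| <= `|z - w|.
Proof.
move=> hz hw.
rewrite -(@ler_pXn2r _ 2) // ?nnegrE ?normr_ge0 // !normCK -subr_ge0.
have -> : (z - w) * (z - w)^* - (1 - z * w^*) * (1 - z * w^*)^*
   = (1 - z * z^*) * (w * w^* - 1).
  rewrite !rmorphB !rmorphM rmorph1 /= conjCK; ring.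
apply: mulr_ge0; rewrite subr_ge0 -normCK.
  by apply: exprn_ile1.
by apply: exprn_ege1.
Qed.

Lemma fact2 (z : C) (ws : seq C) : z != 0 -> `|z| <= 1 ->
  (forall w, w \in ws -> 1 <= `|w|) ->
  `|z| ^+ size ws * \prod_(w <- ws) `|z^-1 - w^*| <= \prod_(w <- ws) `|z - w|.
Proof.
move=> hz0 hz; elim: ws => [|w ws IH] hws; first by rewrite !big_nil expr0 mul1r.
rewrite !big_cons /= exprS.
have e : `|z| * `|z^-1 - w^*| = `|1 - z * w^*|.
  by rewrite -normrM mulrBr mulfV.
rewrite mulrACA e; apply: ler_pM.
- exact: normr_ge0.
- by apply: mulr_ge0; [apply: exprn_ge0; exact: normr_ge0| apply: prodr_ge0 => i _; exact: normr_ge0].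
- by apply: fact1 => //; apply: hws; rewrite mem_head.
by apply: IH => v hv; apply: hws; rewrite in_cons hv orbT.
Qed.

Lemma size_s : (size s <= n.+1)%N.
Proof. exact: size_poly. Qed.

Lemma t_horner (z : C) : z != 0 ->
  (tpoly R n a).[z] = z ^+ (2 * n + 1) * (s.[(z^*)^-1])^*.
Proof.
move=> hz.
rewrite /tpoly horner_sum (horner_coef_wide _ size_s) rmorph_sum mulr_sumr.
apply: eq_bigr => k _.
rewrite hornerM hornerC hornerXn rmorphM rmorphXn fmorphV /= conjCK exprVn.
rewrite exprB ?unitfE //; last by case: k => k /= hk; lia.
by rewrite mulrCA.
Qed.

Lemma P_root_ge1 (ha : forall j : nat, `|a j| <= (((j.+2)%:R) ^+ 2)^-1) (z : C) :
  (P_n n a).[z] = 0 -> 1 <= `|z|.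
Proof.
move=> hP; rewrite real_leNgt ?realE ?normr_ge0 ?ler01 ?orbT //.
apply/negP => hz1.
have [hz0|hz0] := eqVneq z 0.
  by move: hP; rewrite hz0 P0 => /eqP; rewrite oner_eq0.
have [ws hws] := closed_field_poly_normal s.
have s0' := s0 R n a.
have sne0 : s != 0 by apply/negP => /eqP h; move: s0'; rewrite h horner0 => /eqP; rewrite eq_sym oner_eq0.
have lc0 : lead_coef s != 0 by rewrite lead_coef_eq0.
have hd : (size ws <= n)%N.
  have := size_s; rewrite [in size s]hws size_scale // size_prod_XsubC.
  by [].
have hw : forall w, w \in ws -> 1 <= `|w|.
  move=> w hw; rewrite real_leNgt ?realE ?normr_ge0 ?ler01 ?orbT //.
  apply/negP => hw1; have := s_nz ha w (ltW hw1).
  by rewrite hws hornerZ horner_prod (big_rem w) //= hornerXsubC subrr mul0r mulr0 eqxx.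
have hzle : `|z| <= 1 := ltW hz1.
have hsz : s.[z] = lead_coef s * \prod_(w <- ws) (z - w).
  rewrite {1}hws hornerZ horner_prod; congr (_ * _); apply: eq_bigr => w _.
  by rewrite hornerXsubC.
have htz : `|(tpoly R n a).[z]| = `|z| ^+ (2 * n + 1) * (`|lead_coef s| *
              \prod_(w <- ws) `|z^-1 - w^*|).
  rewrite t_horner // normrM normrX norm_conjC {1}hws hornerZ horner_prod normrM.
  rewrite normr_prod; congr (_ * (_ * _)); apply: eq_bigr => w _.
  by rewrite hornerXsubC -norm_conjC rmorphB fmorphV /= conjCK.
have hlt : `|(tpoly R n a).[z]| < `|s.[z]|.
  rewrite htz hsz normrM normr_prod.
  have -> : (2 * n + 1 = (2 * n + 1 - size ws) + size ws)%N by lia.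
  rewrite exprD -mulrA mulrCA.
  set A := `|z| ^+ (2 * n + 1 - size ws).
  set B := `|lead_coef s| * \prod_(w <- ws) `|z - w|.
  have hB : 0 < B.
    rewrite /B -normr_prod -normrM -hsz normr_gt0; exact: s_nz ha z hzle.
  have hA : A < 1 by rewrite /A exprn_ilt1 ?normr_ge0 //; apply/eqP; lia.
  apply: le_lt_trans (_ : A * B < B); last by rewrite gtr_pMl.
  rewrite mulrCA; apply: ler_wpM2l; first by rewrite /A exprn_ge0 ?normr_ge0.
  rewrite /B mulrCA; apply: ler_wpM2l; first exact: normr_ge0.
  exact: fact2.
move: hP; rewrite Pst hornerD => /eqP; rewrite addr_eq0 => /eqP hst.
by move: hlt; rewrite hst normrN ltxx.
Qed.

End Ana.

Lemma sum_le_size (F : numDomainType) (T : eqType) (zs : seq T) (f : T -> F) :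
  (forall z, z \in zs -> f z <= 1) -> \sum_(z <- zs) f z <= (size zs)%:R.
Proof.
elim: zs => [|z zs IH] h; first by rewrite big_nil.
rewrite big_cons /= -addn1 natrD addrC; apply: lerD.
  by apply: IH => y hy; apply: h; rewrite in_cons hy orbT.
by apply: h; rewrite mem_head.
Qed.
Lemma size_P (R : realType) n (a : nat -> R[i]) : (size (P_n n a) <= (2 * n + 2))%N.
Proof.
rewrite Pst; apply: leq_trans (size_polyD _ _) _; rewrite geq_max; apply/andP; split.
  by apply: leq_trans (size_s _ _ _) _; lia.
rewrite /tpoly; apply: (big_ind (fun p : {poly R[i]} => (size p <= 2 * n + 2)%N)).
- by rewrite size_poly0.
- by move=> p q hp hq; apply: leq_trans (size_polyD _ _) _; rewrite geq_max hp hq.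
move=> [k hk] _ /=; apply: leq_trans (size_polyMleq _ _) _.
rewrite size_polyXn.
move: (size_polyC_leq1 ((s_n n a)`_k)^*).
set m := size _. move=> hm. lia.
Qed.

Theorem theorem1p2 (R : realType) (n : nat) (a : nat -> R[i])
  (hn : (1 <= n)%N)
  (ha : forall j : nat, `|a j| <= (((j.+2)%:R) ^+ 2)^-1)
  (zs : seq R[i])
  (hzs : P_n n a = \prod_(z <- zs) ('X - z%:P)) :
  (forall j : nat, (j < n)%N -> S_inv zs j.+1 - a j = 0) /\
  (forall r : R[i], 0 < r < 1 -> forall j : nat, (n <= j)%N ->
     `|S_inv zs j.+1 - a j|
       <= r ^- (j - n) / (1 - r ^+ n.+1) * (15 * n%:R + 30 / (1 - r))).
Proof.
split; first exact: (@part1 R n a zs hzs).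
move=> r /andP[r0 r1] j hj.
have hsz : (size zs <= 2 * n + 1)%N.
  have := size_P R n a; rewrite hzs size_prod_XsubC; lia.
have hS : `|S_inv zs j.+1| <= (size zs)%:R.
  apply: le_trans (ler_norm_sum _ _ _) _; apply: sum_le_size => z hz.
  have hz1 : 1 <= `|z|.
    apply: (@P_root_ge1 R n a ha z); apply/eqP; move: (root_prod_XsubC zs z).
    by rewrite hz -hzs.
  have hz0 : 0 < `|z| by apply: lt_le_trans hz1; exact: ltr01.
  rewrite normrX normfV; apply: exprn_ile1; first by rewrite invr_ge0 normr_ge0.
  by rewrite invf_le1.
have haj : `|a j| <= 1.
  apply: le_trans (ha j) _; rewrite invf_le1 ?exprn_gt0 ?ltr0n //.
  by apply: exprn_ege1; rewrite ler1n.
have h1 : `|S_inv zs j.+1 - a j| <= (15 * n)%:R.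
  apply: le_trans (ler_normB _ _) _.
  apply: le_trans (lerD hS haj) _.
  rewrite natr1 ler_nat; lia.
apply: le_trans h1 _; rewrite natrM.
have hr1 : 0 < 1 - r by rewrite subr_gt0.
have hK : 15%:R * n%:R <= 15 * n%:R + 30 / (1 - r).
  rewrite lerDl; apply: divr_ge0; [by rewrite ler0n | exact: ltW].
apply: le_trans hK _.
apply: ler_peMl.
  apply: addr_ge0; first by rewrite mulr_ge0 ?ler0n.
  by apply: divr_ge0; [rewrite ler0n | exact: ltW].
apply: mulr_ege1.
  rewrite invf_ge1 ?exprn_gt0 //; apply: exprn_ile1; [exact: ltW | exact: ltW].
have hq : 0 < 1 - r ^+ n.+1 by rewrite subr_gt0 exprn_ilt1 ?(ltW r0).
rewrite invf_ge1 // gerBl; apply: exprn_ge0; exact: ltW.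
Qed.
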